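(* Let $R$ be a unital associative superalgebra over $\Bbbk$ and $n\geqslant 2$. Then the Lie superalgebra $\mathfrak{sq}_n(R)$ is perfect, i.e. $[\mathfrak{sq}_n(R),\mathfrak{sq}_n(R)]=\mathfrak{sq}_n(R)$, and $$\mathfrak{sq}_n(R)=\left\{\begin{pmatrix}A&B\\\rho(B)&\rho(A)\end{pmatrix}: A,B\in\mathrm{M}_n(R),\ \mathrm{Tr}(B)\in[R,R]\right\}.$$
   Context: $\Bbbk$ is a unital commutative associative ring in which $2$ is invertible; $|x|$ denotes parity. $[R,R]$ is the $\Bbbk$-span of super-commutators $ab-(-1)^{|a||b|}ba$ of homogeneous $a,b\in R$. $\mathfrak{gl}_{n|n}(R)$ is the Lie superalgebra of $2n\times 2n$ matrices over $R$ with the matrix unit $e_{ij}(a)$ of parity $|i|+|j|+|a|$ ($|i|=0$ for $i\leqslant n$, $|i|=1$ for $i>n$) and bracket $[X,Y]=XY-(-1)^{|X||Y|}YX$. For homogeneous $a\in R$, $\rho(a)=(-1)^{|a|}a$ (extended linearly), applied entrywise to matrices. $\mathfrak{q}_n(R)=\left\{\begin{pmatrix}A&B\\\rho(B)&\rho(A)\end{pmatrix}: A,B\in \mathrm{M}_n(R)\right\}\subseteq\mathfrak{gl}_{n|n}(R)$ and $\mathfrak{sq}_n(R)=[\mathfrak{q}_n(R),\mathfrak{q}_n(R)]$. *)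

(* Defs.v *)
From HB Require Import structures.
From mathcomp Require Import all_boot all_order all_algebra.
Set Implicit Arguments. Unset Strict Implicit. Unset Printing Implicit Defensive.
Import GRing.Theory.
Local Open Scope ring_scope.

(* A Z/2-grading R = R_0 (+) R_1 of a unital associative k-algebra R,
   given by the k-linear projection [ev] onto R_0 along R_1.
   R_0 = {x | ev x = x}, R_1 = {x | ev x = 0}. *)
Record superalgebra (k : comPzRingType) (R : algType k) := SuperAlgebra {
  ev : R -> R;
  ev_linear : forall (c : k) (x y : R), ev (c *: x + y) = c *: ev x + ev y;
  ev_idem : forall x, ev (ev x) = ev x;
  ev_one : ev 1 = 1;
  ev_mul00 : forall x y, ev x = x -> ev y = y -> ev (x * y) = x * y;
  ev_mul01 : forall x y, ev x = x -> ev y = 0 -> ev (x * y) = 0;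
  ev_mul10 : forall x y, ev x = 0 -> ev y = y -> ev (x * y) = 0;
  ev_mul11 : forall x y, ev x = 0 -> ev y = 0 -> ev (x * y) = x * y
}.

Section Defs.
Variables (k : comPzRingType) (R : algType k) (S : superalgebra R).

(* a is homogeneous of parity b (false = even, true = odd) *)
Definition homog (b : bool) (a : R) : Prop :=
  if b then ev S a = 0 else ev S a = a.

(* rho(a0 + a1) = a0 - a1 *)
Definition rho (a : R) : R := ev S a - (a - ev S a).

Definition kspan (V : nmodType) (sc : k -> V -> V) (P : V -> Prop) (x : V) : Prop :=
  exists (m : nat) (c : 'I_m -> k) (v : 'I_m -> V),
    (forall i, P (v i)) /\ x = \sum_(i < m) sc (c i) (v i).

Definition scommR (x : R) : Prop :=
  exists (pa pb : bool) (a b : R), homog pa a /\ homog pb b /\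
    x = a * b - (if pa && pb then -1 else 1) * (b * a).

Definition commRR : R -> Prop := kspan (fun c (a : R) => c *: a) scommR.

Variable n : nat.

Definition gl := 'M[R]_(n + n).

(* parity of a row/column index: |i| = 0 for i < n (0-based), 1 otherwise *)
Definition ipar (i : 'I_(n + n)) : bool := (n <= i)%N.

Definition homog_mx (p : bool) (X : gl) : Prop :=
  forall i j, homog (p (+) ipar i (+) ipar j) (X i j).

Definition kscale (c : k) (X : gl) : gl := map_mx (fun a => c *: a) X.

Definition sbracket (p q : bool) (X Y : gl) : gl :=
  X *m Y - (if p && q then -1 else 1) *: (Y *m X).

Definition qmat (A B : 'M[R]_n) : gl :=
  block_mx A B (map_mx rho B) (map_mx rho A).

Definition in_q (X : gl) : Prop := exists A B, X = qmat A B.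

Definition brackets (P : gl -> Prop) (Z : gl) : Prop :=
  exists (p q : bool) (X Y : gl),
    P X /\ P Y /\ homog_mx p X /\ homog_mx q Y /\ Z = sbracket p q X Y.

Definition lie_comm (P : gl -> Prop) : gl -> Prop := kspan kscale (brackets P).

Definition in_sq : gl -> Prop := lie_comm in_q.

End Defs.

(* Main.v *)
Require Import Defs.
From HB Require Import structures.
From mathcomp Require Import all_boot all_order all_algebra.
Set Implicit Arguments. Unset Strict Implicit. Unset Printing Implicit Defensive.
Import GRing.Theory.
Local Open Scope ring_scope.


Section Kspan.
Variables (k : comPzRingType) (V : zmodType) (sc : k -> V -> V).
Hypotheses (scD : forall c x y, sc c (x + y) = sc c x + sc c y)
  (scA : forall c d x, sc c (sc d x) = sc (c * d) x)
  (sc1 : forall x, sc 1 x = x).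

Lemma sc0 c : sc c 0 = 0.
Proof. by apply: (addrI (sc c 0)); rewrite -scD !addr0. Qed.

Lemma kspan_in (P : V -> Prop) x : P x -> kspan sc P x.
Proof.
move=> Px; exists 1%N, (fun _ => 1), (fun _ => x); split => //.
by rewrite big_ord1 sc1.
Qed.

Lemma kspan0 (P : V -> Prop) : kspan sc P 0.
Proof. by exists 0%N, (fun _ => 1), (fun _ => 0); split; [by case|by rewrite big_ord0]. Qed.

Lemma kspan_add (P : V -> Prop) x y : kspan sc P x -> kspan sc P y -> kspan sc P (x + y).
Proof.
move=> [m1 [c1 [v1 [H1 ->]]]] [m2 [c2 [v2 [H2 ->]]]].
exists (m1 + m2)%N, (fun i => match split i with inl a => c1 a | inr b => c2 b end),
  (fun i => match split i with inl a => v1 a | inr b => v2 b end); split.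
  by move=> i; case: split.
rewrite big_split_ord /=; congr (_ + _); apply: eq_bigr => i _.
  by rewrite (unsplitK (inl i)).
by rewrite (unsplitK (inr i)).
Qed.

Lemma kspan_scale (P : V -> Prop) c x : kspan sc P x -> kspan sc P (sc c x).
Proof.
move=> [m [c1 [v1 [H1 ->]]]]; exists m, (fun i => c * c1 i), v1; split => //.
rewrite (big_morph (sc c) (scD c) (sc0 c)); apply: eq_bigr => i _; exact: scA.
Qed.

Lemma kspan_ind (P Q : V -> Prop) : Q 0 -> (forall x y, Q x -> Q y -> Q (x + y)) ->
  (forall c x, Q x -> Q (sc c x)) -> (forall x, P x -> Q x) ->
  forall x, kspan sc P x -> Q x.
Proof.
move=> Q0 QD QZ PQ x [m [c [v [Hv ->]]]].
by apply: (big_ind Q) => // i _; apply/QZ/PQ.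
Qed.

Lemma kspan_mono (P Q : V -> Prop) : (forall x, P x -> Q x) ->
  forall x, kspan sc P x -> kspan sc Q x.
Proof.
move=> PQ; apply: kspan_ind; [exact: kspan0|exact: kspan_add|exact: kspan_scale|].
by move=> x /PQ; apply: kspan_in.
Qed.

End Kspan.
Section Super.
Variables (k : comPzRingType) (R : algType k) (S : superalgebra R).
Local Notation ev := (ev S).
Local Notation rho := (rho S).
Local Notation homog := (homog S).

Lemma evD x y : ev (x + y) = ev x + ev y.
Proof. by have := ev_linear S 1 x y; rewrite !scale1r. Qed.
Lemma ev0 : ev 0 = 0.
Proof. by apply: (addrI (ev 0)); rewrite -evD !addr0. Qed.
Lemma evZ c x : ev (c *: x) = c *: ev x.
Proof. by have := ev_linear S c x 0; rewrite !addr0 ev0 addr0. Qed.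
Lemma evN x : ev (- x) = - ev x.
Proof. by rewrite -scaleN1r evZ scaleN1r. Qed.
Lemma evB x y : ev (x - y) = ev x - ev y.
Proof. by rewrite evD evN. Qed.

Lemma homog0 b : homog b 0.
Proof. by case: b; rewrite /Defs.homog ev0. Qed.
Lemma homogD b x y : homog b x -> homog b y -> homog b (x + y).
Proof. by case: b; rewrite /Defs.homog evD => -> ->; rewrite ?addr0. Qed.
Lemma homogN b x : homog b x -> homog b (- x).
Proof. by case: b; rewrite /Defs.homog evN => ->; rewrite ?oppr0. Qed.
Lemma homogZ b c x : homog b x -> homog b (c *: x).
Proof. by case: b; rewrite /Defs.homog evZ => ->; rewrite ?scaler0. Qed.
Lemma homog_ev x : homog false (ev x).
Proof. exact: ev_idem. Qed.
Lemma homog_odd x : homog true (x - ev x).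
Proof. by rewrite /Defs.homog evB ev_idem subrr. Qed.
Lemma homog1 : homog false 1.
Proof. exact: ev_one. Qed.
Lemma homogM p q a b : homog p a -> homog q b -> homog (p (+) q) (a * b).
Proof.
case: p; case: q; rewrite /Defs.homog /= => ha hb.
- exact: ev_mul11.
- exact: ev_mul10.
- exact: ev_mul01.
- exact: ev_mul00.
Qed.

Lemma homog_split (P : R -> Prop) :
  (forall x y, P x -> P y -> P (x + y)) -> (forall b a, homog b a -> P a) ->
  forall a, P a.
Proof.
move=> PD Ph a; have -> : a = ev a + (a - ev a) by rewrite addrC subrK.
by apply: PD; [apply: (Ph false); apply: homog_ev|apply: (Ph true); apply: homog_odd].
Qed.

Lemma rhoE a : rho a = ev a - (a - ev a).
Proof. by []. Qed.
Lemma rho_homog b a : homog b a -> rho a = (if b then -1 else 1) * a.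
Proof.
by case: b; rewrite rhoE /Defs.homog => ->; rewrite ?subr0 ?sub0r ?subrr ?subr0 ?mulN1r ?mul1r.
Qed.
Lemma rhoE2 a : rho a = ev a *+ 2 - a.
Proof. by rewrite rhoE opprB addrA mulr2n. Qed.
Lemma rhoD x y : rho (x + y) = rho x + rho y.
Proof. by rewrite !rhoE2 evD mulrnDl opprD addrACA. Qed.
Lemma rho0 : rho 0 = 0.
Proof. by rewrite rhoE2 ev0 mul0rn subr0. Qed.
Lemma rhoN x : rho (- x) = - rho x.
Proof. by rewrite !rhoE2 evN mulNrn opprB opprK addrC. Qed.
Lemma rhoB x y : rho (x - y) = rho x - rho y.
Proof. by rewrite rhoD rhoN. Qed.
Lemma rhoZ c x : rho (c *: x) = c *: rho x.
Proof. by rewrite !rhoE2 evZ scalerBr scalerMnr. Qed.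
Lemma rho1 : rho 1 = 1.
Proof. by rewrite (rho_homog homog1) mul1r. Qed.
Lemma rhoK x : rho (rho x) = x.
Proof.
have e : ev (rho x) = ev x by rewrite rhoE !evB ev_idem subrr subr0.
by rewrite [rho (rho x)]rhoE2 e rhoE2 opprB addrC subrK.
Qed.
Lemma rhoM_split x0 x1 y0 y1 : homog false x0 -> homog true x1 ->
  homog false y0 -> homog true y1 ->
  rho ((x0 + x1) * (y0 + y1)) = rho (x0 + x1) * rho (y0 + y1).
Proof.
move=> hx0 hx1 hy0 hy1.
rewrite (rhoD x0 x1) (rhoD y0 y1) (rho_homog hx0) (rho_homog hx1) (rho_homog hy0) (rho_homog hy1).
rewrite mulrDl !mulrDr !rhoD !(rho_homog (homogM hx0 hy0)) !(rho_homog (homogM hx0 hy1)).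
rewrite !(rho_homog (homogM hx1 hy0)) !(rho_homog (homogM hx1 hy1)) /=.
by rewrite !mul1r !mulN1r ?mulrN ?mulNr ?opprK !mulrBl opprB addrACA [- (x0 * y1) + _]addrC.
Qed.
Lemma rhoM x y : rho (x * y) = rho x * rho y.
Proof.
have ex : x = ev x + (x - ev x) by rewrite addrC subrK.
have ey : y = ev y + (y - ev y) by rewrite addrC subrK.
rewrite ex ey; apply: rhoM_split; [exact: homog_ev|exact: homog_odd|exact: homog_ev|exact: homog_odd].
Qed.
Lemma homog_rho b a : homog b a -> homog b (rho a).
Proof.
by move=> h; rewrite (rho_homog h); case: b h => h; rewrite ?mul1r ?mulN1r //; apply: homogN.
Qed.
End Super.


Section Mx.
Variables (k : comPzRingType) (R : algType k) (S : superalgebra R) (n : nat).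
Local Notation ev := (ev S).
Local Notation rho := (rho S).
Local Notation homog := (homog S).
Local Notation Q := (@qmat _ _ S n).
Local Notation mrho := (map_mx rho).

Definition E (i j : 'I_n) (a : R) : 'M[R]_n :=
  \matrix_(r, c) (if (r == i) && (c == j) then a else 0).

Lemma E_mul i j l m a b :
  E i j a *m E l m b = if j == l then E i m (a * b) else 0.
Proof.
apply/matrixP => r c; rewrite !mxE (bigD1 j) //= big1 ?addr0; last first.
  by move=> t /negbTE tj; rewrite !mxE tj andbF mul0r.
rewrite !mxE eqxx andbT.
have [jl|jl] := eqVneq j l.
  subst l; rewrite /= mxE.
  by case: (r == i); case: (c == m); rewrite ?mulr0 ?mul0r.
by rewrite /= mulr0 mxE.
Qed.

Lemma ED i j a b : E i j (a + b) = E i j a + E i j b.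
Proof. by apply/matrixP => r c; rewrite !mxE; case: ifP; rewrite ?addr0. Qed.
Lemma EN i j a : E i j (- a) = - E i j a.
Proof. by apply/matrixP => r c; rewrite !mxE; case: ifP; rewrite ?oppr0. Qed.
Lemma E0 i j : E i j 0 = 0.
Proof. by apply/matrixP => r c; rewrite !mxE; case: ifP. Qed.
Lemma EZR i j (s a : R) : s *: E i j a = E i j (s * a).
Proof. by apply/matrixP => r c; rewrite !mxE; case: ifP; rewrite ?mulr0. Qed.
Lemma Ekscale i j (c : k) a : map_mx (fun x => c *: x) (E i j a) = E i j (c *: a).
Proof. by apply/matrixP => r t; rewrite !mxE; case: ifP; rewrite ?scaler0. Qed.
Lemma Erho i j a : mrho (E i j a) = E i j (rho a).
Proof. by apply/matrixP => r t; rewrite !mxE; case: ifP; rewrite ?rho0. Qed.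

Lemma mxrhoD (A B : 'M[R]_n) : mrho (A + B) = mrho A + mrho B.
Proof. by apply/matrixP => r c; rewrite !mxE rhoD. Qed.
Lemma mxrhoN (A : 'M[R]_n) : mrho (- A) = - mrho A.
Proof. by apply/matrixP => r c; rewrite !mxE rhoN. Qed.
Lemma mxrho0 : mrho (0 : 'M[R]_n) = 0.
Proof. by apply/matrixP => r c; rewrite !mxE rho0. Qed.
Lemma mxrhoZ (s : R) (A : 'M[R]_n) : mrho (s *: A) = rho s *: mrho A.
Proof. by apply/matrixP => r c; rewrite !mxE rhoM. Qed.
Lemma mxrhoK (A : 'M[R]_n) : mrho (mrho A) = A.
Proof. by apply/matrixP => r c; rewrite !mxE rhoK. Qed.
Lemma mxrhoM (A B : 'M[R]_n) : mrho (A *m B) = mrho A *m mrho B.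
Proof.
apply/matrixP => r c; rewrite !mxE (big_morph rho (@rhoD _ _ S) (rho0 S)).
by apply: eq_bigr => i _; rewrite rhoM !mxE.
Qed.
Lemma mxrhoks (c : k) (A : 'M[R]_n) :
  map_mx (fun x => c *: x) (mrho A) = mrho (map_mx (fun x => c *: x) A).
Proof. by apply/matrixP => r t; rewrite !mxE rhoZ. Qed.

Lemma qmat_add A B C D : Q A B + Q C D = Q (A + C) (B + D).
Proof. by rewrite /qmat add_block_mx !mxrhoD. Qed.
Lemma qmat_opp A B : - Q A B = Q (- A) (- B).
Proof. by rewrite /qmat opp_block_mx !mxrhoN. Qed.
Lemma qmat0 : Q 0 0 = 0.
Proof. by rewrite /qmat mxrho0 block_mx0. Qed.
Lemma qmat_scale (s : R) A B : rho s = s -> s *: Q A B = Q (s *: A) (s *: B).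
Proof. by move=> hs; rewrite /qmat scale_block_mx !mxrhoZ hs. Qed.
Lemma qmat_mul A B C D :
  Q A B *m Q C D = Q (A *m C + B *m mrho D) (A *m D + B *m mrho C).
Proof.
rewrite /qmat mulmx_block !mxrhoD !mxrhoM !mxrhoK.
by rewrite [mrho B *m C + _]addrC [mrho B *m D + _]addrC.
Qed.
Lemma kscale_qmat c A B :
  kscale c (Q A B) = Q (map_mx (fun x => c *: x) A) (map_mx (fun x => c *: x) B).
Proof. by rewrite /kscale /qmat map_block_mx !mxrhoks. Qed.

Definition sgn (b : bool) : R := if b then -1 else 1.

Lemma sbracket_q p q A B C D :
  sbracket p q (Q A B) (Q C D) =
  Q (A *m C + B *m mrho D - sgn (p && q) *: (C *m A + D *m mrho B))
    (A *m D + B *m mrho C - sgn (p && q) *: (C *m B + D *m mrho A)).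
Proof.
rewrite /sbracket !qmat_mul qmat_scale; last by rewrite /sgn; case: (p && q); rewrite ?rhoN rho1.
by rewrite qmat_opp qmat_add.
Qed.


Definition hmx (p : bool) (M : 'M[R]_n) := forall r c, homog p (M r c).

Lemma hom0 p : hmx p 0.
Proof. by move=> r c; rewrite mxE; apply: homog0. Qed.
Lemma homD p M N : hmx p M -> hmx p N -> hmx p (M + N).
Proof. by move=> hM hN r c; rewrite mxE; apply: homogD. Qed.
Lemma homN p M : hmx p M -> hmx p (- M).
Proof. by move=> hM r c; rewrite mxE; apply: homogN. Qed.
Lemma homE p i j a : homog p a -> hmx p (E i j a).
Proof. by move=> ha r c; rewrite mxE; case: ifP => _ //; apply: homog0. Qed.
Lemma hom_rho p M : hmx p M -> hmx p (mrho M).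
Proof. by move=> hM r c; rewrite mxE; apply: homog_rho. Qed.

Lemma ipar_l (i : 'I_n) : ipar (lshift n i) = false.
Proof. by rewrite /ipar /= leqNgt ltn_ord. Qed.
Lemma ipar_r (i : 'I_n) : ipar (rshift n i) = true.
Proof. by rewrite /ipar /= leq_addr. Qed.

Lemma homog_qmat p A B : hmx p A -> hmx (~~ p) B -> homog_mx S p (Q A B).
Proof.
move=> hA hB i j; rewrite /qmat -(splitK i) -(splitK j).
case: (split i) => i'; case: (split j) => j' /=;
  rewrite ?ipar_l ?ipar_r ?block_mxEul ?block_mxEur ?block_mxEdl ?block_mxEdr.
- by rewrite !addbF; apply: hA.
- by rewrite addbF addbT; apply: hB.
- by rewrite addbF addbT; apply: hom_rho.
- by rewrite addbT addbT negbK; apply: hom_rho.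
Qed.

Lemma homog_qmat_inv p A B : homog_mx S p (Q A B) -> hmx p A /\ hmx (~~ p) B.
Proof.
move=> h; split => r c.
  by have := h (lshift n r) (lshift n c); rewrite /qmat block_mxEul !ipar_l !addbF.
by have := h (lshift n r) (rshift n c); rewrite /qmat block_mxEur ipar_l ipar_r addbF addbT.
Qed.

Lemma commRR_add x y : commRR S x -> commRR S y -> commRR S (x + y).
Proof. exact: kspan_add. Qed.
Lemma commRR_scale c x : commRR S x -> commRR S (c *: x).
Proof. by apply: kspan_scale => *; rewrite ?scalerDr ?scalerA. Qed.
Lemma commRR_opp x : commRR S x -> commRR S (- x).
Proof. by move=> h; rewrite -scaleN1r; apply: commRR_scale. Qed.
Lemma commRR0 : commRR S 0.
Proof. exact: kspan0. Qed.
Lemma commRR_scomm pa pb a b : homog pa a -> homog pb b ->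
  commRR S (a * b - (if pa && pb then -1 else 1) * (b * a)).
Proof.
move=> ha hb; apply: kspan_in; first exact: scale1r.
by exists pa, pb, a, b.
Qed.

Lemma tr_part1 p q A D : hmx p A -> hmx (~~ q) D ->
  commRR S (\tr (A *m D) - sgn (p && q) * \tr (D *m mrho A)).
Proof.
move=> hA hD.
have e1 : \tr (D *m mrho A) = \sum_i \sum_l D l i * rho (A i l).
  rewrite /mxtrace; under eq_bigr do rewrite mxE.
  by rewrite exchange_big; apply: eq_bigr => i _; apply: eq_bigr => l _; rewrite ?mxE.
have e2 : \tr (A *m D) = \sum_i \sum_l A i l * D l i.
  by rewrite /mxtrace; apply: eq_bigr => i _; rewrite mxE.
rewrite e1 e2 mulr_sumr -sumrB; apply: (big_ind (commRR S)) => //.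
  exact: commRR0.
  exact: commRR_add.
move=> i _; rewrite mulr_sumr -sumrB; apply: (big_ind (commRR S)) => //.
  exact: commRR0.
  exact: commRR_add.
move=> l _; rewrite (rho_homog (hA i l)).
have := commRR_scomm (hA i l) (hD l i).
clear hA hD e1 e2.
by rewrite /sgn; case: p; case: q; rewrite /= ?mul1r ?mulN1r ?mulrN ?opprK.
Qed.

Lemma tr_part2 p q B C : hmx (~~ p) B -> hmx q C ->
  commRR S (\tr (B *m mrho C) - sgn (p && q) * \tr (C *m B)).
Proof.
move=> hB hC.
have e1 : \tr (C *m B) = \sum_i \sum_l C l i * B i l.
  rewrite /mxtrace; under eq_bigr do rewrite mxE.
  by rewrite exchange_big; apply: eq_bigr => i _; apply: eq_bigr => l _; rewrite ?mxE.
have e2 : \tr (B *m mrho C) = \sum_i \sum_l B i l * rho (C l i).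
  by rewrite /mxtrace; apply: eq_bigr => i _; rewrite mxE; apply: eq_bigr => l _; rewrite ?mxE.
rewrite e1 e2 mulr_sumr -sumrB; apply: (big_ind (commRR S)) => //.
  exact: commRR0.
  exact: commRR_add.
move=> i _; rewrite mulr_sumr -sumrB; apply: (big_ind (commRR S)) => //.
  exact: commRR0.
  exact: commRR_add.
move=> l _; rewrite (rho_homog (hC l i)).
have := commRR_scomm (hB i l) (hC l i).
clear hB hC e1 e2.
rewrite /sgn; case: p; case: q; rewrite /= ?mul1r ?mulN1r ?mulrN ?mulNr ?opprK //.
  by move/commRR_opp; rewrite opprB addrC.
by move/commRR_opp; rewrite opprD.
Qed.


Definition Tset (X : 'M[R]_(n + n)) := exists A B, X = Q A B /\ commRR S (\tr B).

Lemma mxtraceB (M N : 'M[R]_n) : \tr (M - N) = \tr M - \tr N.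
Proof. by rewrite mxtraceD /mxtrace -sumrN; congr (_ + _); apply: eq_bigr => i _; rewrite mxE. Qed.

Lemma bracket_T p q X Y : in_q S X -> in_q S Y -> homog_mx S p X -> homog_mx S q Y ->
  Tset (sbracket p q X Y).
Proof.
move=> [A [B ->]] [C [D ->]] /homog_qmat_inv [hA hB] /homog_qmat_inv [hC hD].
rewrite sbracket_q; eexists; eexists; split; first reflexivity.
rewrite mxtraceB mxtraceZ !mxtraceD [\tr (C *m B) + _]addrC mulrDr opprD addrACA.
by apply: commRR_add; [apply: tr_part1|apply: tr_part2].
Qed.

Lemma T0 : Tset 0.
Proof. by exists 0, 0; rewrite qmat0 mxtrace0; split => //; apply: commRR0. Qed.
Lemma T_add X Y : Tset X -> Tset Y -> Tset (X + Y).
Proof.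
move=> [A [B [-> hB]]] [C [D [-> hD]]]; exists (A + C), (B + D).
by rewrite qmat_add mxtraceD; split => //; apply: commRR_add.
Qed.
Lemma tr_kscale c (B : 'M[R]_n) : \tr (map_mx (fun x => c *: x) B) = c *: \tr B.
Proof. by rewrite /mxtrace scaler_sumr; apply: eq_bigr => i _; rewrite mxE. Qed.
Lemma T_kscale c X : Tset X -> Tset (kscale c X).
Proof.
move=> [A [B [-> hB]]]; rewrite kscale_qmat; eexists; eexists; split; first reflexivity.
by rewrite tr_kscale; apply: commRR_scale.
Qed.

Lemma in_sq_T X : in_sq S X -> Tset X.
Proof.
apply: kspan_ind; [exact: T0|exact: T_add|exact: T_kscale|].
by move=> Z [p [q [X1 [Y1 [h1 [h2 [h3 [h4 ->]]]]]]]]; apply: bracket_T.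
Qed.

Lemma in_sq_q (X : gl R n) : in_sq S X -> in_q S X.
Proof. by move/in_sq_T => [A [B [-> _]]]; exists A, B. Qed.

End Mx.


Section Gen.
Variables (k : comPzRingType) (R : algType k) (S : superalgebra R) (n : nat).
Local Notation ev := (ev S).
Local Notation rho := (rho S).
Local Notation homog := (homog S).
Local Notation Q := (@qmat _ _ S n).
Local Notation mrho := (map_mx rho).
Local Notation E := (@E _ R n).
Local Notation QA A := (Q A 0).
Local Notation QB B := (Q 0 B).

Definition G : gl R n -> Prop := lie_comm S (in_sq S (n:=n)).

Lemma kscaleD c (X Y : gl R n) : kscale c (X + Y) = kscale c X + kscale c Y.
Proof. by apply/matrixP => r t; rewrite !mxE scalerDr. Qed.
Lemma kscaleA c d (X : gl R n) : kscale c (kscale d X) = kscale (c * d) X.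
Proof. by apply/matrixP => r t; rewrite !mxE scalerA. Qed.
Lemma kscale1 (X : gl R n) : kscale 1 X = X.
Proof. by apply/matrixP => r t; rewrite !mxE scale1r. Qed.
Lemma kscaleN1 (X : gl R n) : kscale (-1) X = - X.
Proof. by apply/matrixP => r t; rewrite !mxE scaleN1r. Qed.

Lemma G_add X Y : G X -> G Y -> G (X + Y).
Proof. exact: kspan_add. Qed.
Lemma G_scale c X : G X -> G (kscale c X).
Proof. by apply: kspan_scale => *; rewrite ?kscaleD ?kscaleA. Qed.
Lemma G_opp X : G X -> G (- X).
Proof. by move=> h; rewrite -kscaleN1; apply: G_scale. Qed.
Lemma G0 : G 0.
Proof. exact: kspan0. Qed.
Lemma sq_br p q (X Y : gl R n) : in_q S X -> in_q S Y -> homog_mx S p X -> homog_mx S q Y ->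
  in_sq S (sbracket p q X Y).
Proof.
move=> *; apply: kspan_in; first exact: kscale1.
by exists p, q, X, Y.
Qed.
Lemma G_br p q (X Y : gl R n) : in_sq S X -> in_sq S Y -> homog_mx S p X -> homog_mx S q Y ->
  G (sbracket p q X Y).
Proof.
move=> *; apply: kspan_in; first exact: kscale1.
by exists p, q, X, Y.
Qed.
Lemma inqQ A B : in_q S (Q A B).
Proof. by exists A, B. Qed.

Lemma homQA p A : hmx S p A -> homog_mx S p (QA A).
Proof. by move=> h; apply: homog_qmat => //; apply: hom0. Qed.
Lemma homQB p B : hmx S p B -> homog_mx S (~~ p) (QB B).
Proof. by move=> h; apply: homog_qmat; [apply: hom0|rewrite negbK]. Qed.

Ltac simpq :=
  rewrite ?sbracket_q ?mxrho0 ?Erho ?rho1 ?mxrhoD ?mxrhoN ?Erho ?rho1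
    ?mulmxBl ?mulmxBr ?mul0mx ?mulmx0 ?E_mul ?eqxx /=;
  rewrite ?addr0 ?add0r ?scaler0 ?subr0 ?sub0r ?oppr0 ?mulr1 ?mul1r ?andbF ?andbT.

Section A.
Variables (i j : 'I_n).
Hypothesis ij : i != j.
Let ji : j != i. Proof. by rewrite eq_sym. Qed.

Lemma S1 p a : homog p a -> in_sq S (QA (E i j a)).
Proof.
move=> ha; have -> : QA (E i j a) = sbracket p false (QA (E i i a)) (QA (E i j 1)).
  by simpq; rewrite (negbTE ji) /= scale1r subr0.
apply: sq_br; [exact: inqQ|exact: inqQ|apply: homQA; apply: homE ..] => //.
exact: homog1.
Qed.


Lemma S3 p b : homog p b -> in_sq S (QB (E i j b)).
Proof.
move=> hb; have -> : QB (E i j b) = sbracket false (~~ p) (QA (E i i 1)) (QB (E i j b)).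
  by simpq; rewrite (negbTE ji) /= scale1r subr0.
apply: sq_br; [exact: inqQ|exact: inqQ|apply: homQA; apply: homE|].
  exact: homog1.
by apply: homQB; apply: homE.
Qed.
End A.

Variable h : k.
Hypothesis h2 : 2%:R * h = 1.

Lemma half A B : Q A B = kscale h (Q (A + A) (B + B)).
Proof.
have hh : h + h = 1 by rewrite -h2 mulr_natl mulr2n.
rewrite kscale_qmat; congr Q; apply/matrixP => r t; by rewrite !mxE scalerDr -scalerDl hh scale1r.
Qed.

Section B.
Variables (i j : 'I_n).
Hypothesis ij : i != j.
Let ji : j != i. Proof. by rewrite eq_sym. Qed.

Let H := E i i 1 - E j j 1.
Lemma homH : hmx S false H.
Proof. by apply: homD; [|apply: homN]; apply: homE; apply: homog1. Qed.
Lemma sqH : in_sq S (QA H).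
Proof.
have -> : QA H = sbracket false false (QA (E i j 1)) (QA (E j i 1)).
  by simpq; rewrite scale1r.
apply: sq_br; [exact: inqQ|exact: inqQ|apply: homQA; apply: homE ..] => //; exact: homog1.
Qed.

Lemma G1 p a : homog p a -> G (QA (E i j a)).
Proof.
move=> ha; rewrite half addr0.
have -> : QA (E i j a + E i j a) = sbracket false p (QA H) (QA (E i j a)).
  by rewrite /H; simpq; rewrite (negbTE ji) /= !scale1r !subr0 sub0r opprK.
apply: G_scale; apply: G_br; [exact: sqH|exact: (S1 ij ha)|apply: homQA; exact: homH|].
by apply: homQA; apply: homE.
Qed.


Lemma G2 p a : homog p a -> G (QA (E i i a)).
Proof.
move=> ha; rewrite half addr0.
have -> : E i i a + E i i a = (E i i a - E j j a) + (E i i a + E j j a).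
  by rewrite addrACA addNr addr0.
have -> : forall X Y, Q (X + Y) 0 = QA X + QA Y by move=> X Y; rewrite qmat_add addr0.
rewrite kscaleD; apply: G_add; apply: G_scale.
  have -> : QA (E i i a - E j j a) = sbracket p false (QA (E i j a)) (QA (E j i 1)).
    by simpq; rewrite scale1r.
  apply: G_br; [exact: (S1 ij ha)|exact: (S1 ji (homog1 S))|apply: homQA; exact: (homE _ _ ha)|].
  by apply: homQA; apply: homE; apply: homog1.
have -> : QA (E i i a + E j j a) = sbracket (~~ p) true (QB (E i j a)) (QB (E j i 1)).
  simpq; rewrite EZR (rho_homog ha); case: (p); rewrite /sgn /= ?mul1r ?mulN1r ?EN ?opprK //.
apply: G_br; [exact: (S3 ij ha)|exact: (S3 ji (homog1 S))| |].
  by apply: homQB; apply: homE.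
by apply: (homQB (p := false)); apply: homE; apply: homog1.
Qed.

Lemma G3 p b : homog p b -> G (QB (E i j b)).
Proof.
move=> hb; rewrite half addr0.
have -> : QB (E i j b + E i j b) = sbracket false (~~ p) (QA H) (QB (E i j b)).
  rewrite /H; simpq; rewrite (negbTE ji) /= ?scale1r ?subr0 ?sub0r ?opprK //.
apply: G_scale; apply: G_br; [exact: sqH|exact: (S3 ij hb)|apply: homQA; exact: homH|].
by apply: homQB; apply: homE.
Qed.

Lemma G4 p b : homog p b -> G (QB (E i i b - E j j b)).
Proof.
move=> hb.
have -> : QB (E i i b - E j j b) = sbracket false (~~ p) (QA (E i j 1)) (QB (E j i b)).
  simpq; rewrite ?scale1r ?subr0 ?sub0r ?opprK //.
apply: G_br; [exact: (S1 ij (homog1 S))|exact: (S3 ji hb)| |].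
  by apply: homQA; apply: homE; apply: homog1.
by apply: homQB; apply: homE.
Qed.

Lemma G5 pa pb a b : homog pa a -> homog pb b ->
  G (QB (E i i (a * b - (if pa && pb then -1 else 1) * (b * a)))).
Proof.
move=> ha hb; set y := (if pa && pb then -1 else 1) * (b * a).
have hy : homog (pb (+) pa) y.
  by rewrite /y; case: (pa && pb); rewrite ?mulN1r ?mul1r; [apply: homogN|]; apply: homogM.
have -> : QB (E i i (a * b - y)) =
   sbracket pa (~~ pb) (QA (E i j a)) (QB (E j i b)) + - QB (E i i y - E j j y).
  simpq.
  have e : sgn R (pa && ~~ pb) *: E j j (b * rho a) = E j j y.
    by rewrite EZR (rho_homog ha) /y /sgn; case: (pa); case: (pb); rewrite /= ?mul1r ?mulN1r ?mulrN ?opprK.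
  by rewrite e qmat_opp qmat_add oppr0 addr0 ED EN opprB addrA subrK.
apply: G_add; last by apply: G_opp; apply: (G4 hy).
apply: G_br; [exact: (S1 ij ha)|exact: (S3 ji hb)| |].
  by apply: homQA; apply: homE.
by apply: homQB; apply: homE.
Qed.


End B.

Lemma QA_add A B : QA (A + B) = QA A + QA B.
Proof. by rewrite qmat_add addr0. Qed.
Lemma QB_add A B : QB (A + B) = QB A + QB B.
Proof. by rewrite qmat_add addr0. Qed.

Variables (i0 i1 : 'I_n).
Hypothesis i01 : i0 != i1.

Lemma other (i : 'I_n) : exists j, i != j.
Proof.
case: (eqVneq i i0) => [->|ne]; first by exists i1.
by exists i0.
Qed.

Lemma GA_all i j a : G (QA (E i j a)).
Proof.
move: a; apply: (homog_split (S := S) (P := fun a => G (QA (E i j a)))) => [x y hx hy|p a ha]; first by rewrite ED QA_add; apply: G_add.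
case: (eqVneq i j) => [<-|ne]; last exact: (G1 ne ha).
have [j' ne] := other i; exact: (G2 ne ha).
Qed.

Lemma GB_off i j b : i != j -> G (QB (E i j b)).
Proof.
move=> ne; move: b; apply: (homog_split (S := S) (P := fun b => G (QB (E i j b)))) => [x y hx hy|p b hb]; first by rewrite ED QB_add; apply: G_add.
exact: (G3 ne hb).
Qed.

Lemma GB_diff i j b : i != j -> G (QB (E i i b - E j j b)).
Proof.
move=> ne; move: b; apply: (homog_split (S := S) (P := fun b => G (QB (E i i b - E j j b)))) => [x y hx hy|p b hb].
  by rewrite !ED opprD addrACA QB_add; apply: G_add.
exact: (G4 ne hb).
Qed.

Lemma mxks0 c : map_mx (fun x => c *: x) (0 : 'M[R]_n) = 0.
Proof. by apply/matrixP => r t; rewrite !mxE scaler0. Qed.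

Lemma GB_comm x : commRR S x -> G (QB (E i0 i0 x)).
Proof.
apply: (kspan_ind (Q := fun x => G (QB (E i0 i0 x)))).
- by rewrite E0 qmat0; apply: G0.
- by move=> x1 y1 hx hy; rewrite ED QB_add; apply: G_add.
- by move=> c x1 hx; rewrite -Ekscale -(mxks0 c) -kscale_qmat; apply: G_scale.
- by move=> x1 [pa [pb [a [b [ha [hb ->]]]]]]; apply: (G5 i01 ha hb).
Qed.

Lemma mx_decomp (M : 'M[R]_n) : M = \sum_i \sum_j E i j (M i j).
Proof.
apply/matrixP => r c; rewrite summxE (bigD1 r) //= summxE (bigD1 c) //= !mxE !eqxx /=.
rewrite big1 ?addr0; last by move=> t /negbTE tc; rewrite mxE eqxx /= eq_sym tc.
rewrite big1 ?addr0 // => t /negbTE tr; rewrite summxE big1 // => u _.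
by rewrite mxE eq_sym tr.
Qed.

Lemma GA_sum (I : Type) (r : seq I) (P : pred I) (F : I -> 'M[R]_n) :
  (forall i, P i -> G (QA (F i))) -> G (QA (\sum_(i <- r | P i) F i)).
Proof.
move=> hF; rewrite (big_morph (fun M => QA M) QA_add (qmat0 S n)).
by apply: (big_ind G) => //; [exact: G0|exact: G_add].
Qed.
Lemma GB_sum (I : Type) (r : seq I) (P : pred I) (F : I -> 'M[R]_n) :
  (forall i, P i -> G (QB (F i))) -> G (QB (\sum_(i <- r | P i) F i)).
Proof.
move=> hF; rewrite (big_morph (fun M => QB M) QB_add (qmat0 S n)).
by apply: (big_ind G) => //; [exact: G0|exact: G_add].
Qed.

Lemma T_G X : Tset S X -> G X.
Proof.
move=> [A [B [-> hB]]].
have -> : Q A B = QA A + QB B by rewrite qmat_add addr0 add0r.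
apply: G_add.
  by rewrite (mx_decomp A); apply: GA_sum => i _; apply: GA_sum => j _; apply: GA_all.
have -> : B = \sum_i (\sum_(j | j != i) E i j (B i j) + (E i i (B i i) - E i0 i0 (B i i)))
    + E i0 i0 (\tr B).
  rewrite /mxtrace (big_morph (E i0 i0) (ED i0 i0) (E0 R i0 i0)) -big_split /=.
  rewrite {1}(mx_decomp B); apply: eq_bigr => i _.
  by rewrite -addrA subrK (bigD1 i) //= addrC.
rewrite QB_add; apply: G_add; last exact: GB_comm.
apply: GB_sum => i _; rewrite QB_add; apply: G_add.
  by apply: GB_sum => j ji; apply: GB_off; rewrite eq_sym.
case: (eqVneq i i0) => [->|ne]; first by rewrite subrr qmat0; apply: G0.
exact: GB_diff.
Qed.

Lemma G_sq X : G X -> in_sq S X.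
Proof.
apply: kspan_mono => [c x y|c d x|x|]; rewrite ?kscaleD ?kscaleA ?kscale1 //.
by move=> Z [p [q [X1 [Y1 [h1 [h2' [h3 [h4 ->]]]]]]]]; exists p, q, X1, Y1; do !split => //;
  apply: in_sq_q.
Qed.

End Gen.

Unset Implicit Arguments.


Theorem corollary2p2 (k : comPzRingType) (R : algType k) (S : superalgebra R)
    (n : nat) :
  (exists h : k, 2%:R * h = 1) -> (2 <= n)%N ->
  (forall X : gl R n, lie_comm S (in_sq S (n:=n)) X <-> in_sq S X) /\
  (forall X : gl R n, in_sq S X <->
     exists A B : 'M[R]_n, X = qmat S A B /\ commRR S (\tr B)).
Proof.
move=> [h h2] n2.
have n0 : (0 < n)%N by apply: leq_trans n2.
pose i0 : 'I_n := Ordinal n0; pose i1 : 'I_n := Ordinal n2.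
have i01 : i0 != i1 by [].
split => X; split.
- exact: G_sq.
- by move/in_sq_T; apply: (T_G h2 i01).
- exact: in_sq_T.
- by move/(T_G h2 i01); apply: G_sq.
Qed.
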